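(* Let $q_1=\dfrac{\rho\varepsilon}{1-\rho(1-\varepsilon)}$, $q_2=(1-\varepsilon)^{I-1}$, and let $\bar\varepsilon\in(0,1)$ be the unique value of $\varepsilon$ with $q_1=q_2$. If $\varepsilon\ge\bar\varepsilon$ then for every information tree $\mathcal T$: $C^p_{\mathcal T}(G)=\Omega$ if $p\le q_1$ and $C^p_{\mathcal T}(G)=\varnothing$ if $p>q_1$.
   Context: Model. Fix an integer $I\ge2$, agents $\mathcal I=\{1,\dots,I\}$, a prior $\rho\in(0,1)$ and a loss probability $\varepsilon\in(0,1)$. A state of nature $\theta\in\{g,b\}$ has $\Pr(\theta=g)=\rho$. A forest $F$ on $\mathcal I$ is a collection of vertex-disjoint undirected trees $T^1,\dots,T^R$ whose vertex sets partition $\mathcal I$; a seeding $s=(s^1,\dots,s^R)$ chooses exactly one vertex $s^r$ of each $T^r$. The pair $\mathcal T=(F,s)$ is an information tree: orient each $T^r$ away from $s^r$ and add a root $0$ (the planner) with an arc $0\to s^r$ for each $r$. If $\theta=b$ no messages are sent. If $\theta=g$ the planner sends a message along each arc $0\to s^r$, and every agent who receives a message forwards it along every arc leaving her. Each transmission along an arc is lost independently with probability $\varepsilon$. Agent $i$ observes only $x_i\in\{y,n\}$ (received / not). $\Omega=\{g,b\}\times\{y,n\}^I$, $\mathbb P_{\mathcal T}$ the induced probability. $G=\{\theta=g\}$, $Y_i=\{x_i=y\}$, $N_i=\Omega\setminus Y_i$, $Y^*=\bigcap_iY_i$. $B^p_i(E)=\{\omega:\mathbb P_{\mathcal T}[E\mid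 x_i=x_i(\omega)]\ge p\}$, $B^p(E)=\bigcap_iB^p_i(E)$, $B^{p,0}(E)=E$, $B^{p,\ell}(E)=B^p(B^{p,\ell-1}(E))$, $C^p_{\mathcal T}(E)=\bigcap_{\ell\ge1}B^{p,\ell}(E)$. *)

(* Defs.v *)
From HB Require Import structures.
From mathcomp Require Import all_boot all_order all_algebra.
From mathcomp Require Import boolp classical_sets reals.
Set Implicit Arguments. Unset Strict Implicit. Unset Printing Implicit Defensive.
Import Order.TTheory GRing.Theory Num.Theory.
Local Open Scope ring_scope.

(* Agents are 'I_n (n = I).  An information tree (F, s) is encoded by the
   parent map of the oriented tree: par i = None means the arc 0 -> i
   (i is a seed), par i = Some j means the arc j -> i.  Every agent has
   exactly one incoming arc, which we index by the agent itself. *)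
Definition tree_acyclic (n : nat) (par : 'I_n -> option 'I_n) : Prop :=
  forall i : 'I_n, exists k : nat, iter k (fun o => obind par o) (Some i) = None.

(* j lies on the path from the planner to i (j = i allowed). *)
Definition anc (n : nat) (par : 'I_n -> option 'I_n) (i j : 'I_n) : bool :=
  [exists k : 'I_n.+1, iter k (fun o => obind par o) (Some i) == Some j].

(* Given the success pattern s of the transmissions (s j = arc into j not
   lost), the receipt profile x (true = y). *)
Definition recv (n : nat) (par : 'I_n -> option 'I_n)
  (s : {ffun 'I_n -> bool}) : {ffun 'I_n -> bool} :=
  [ffun i => [forall j, anc par i j ==> s j]].

(* Omega = {g,b} x {y,n}^I ; true = g, true = y *)
Definition Omega (n : nat) := (bool * {ffun 'I_n -> bool})%type.

Section Prob.
Variables (R : realType) (n : nat) (rho eps : R) (par : 'I_n -> option 'I_n).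

Definition succ_weight (s : {ffun 'I_n -> bool}) : R :=
  \prod_(j : 'I_n) (if s j then 1 - eps else eps).

Definition Pomega (w : Omega n) : R :=
  if w.1 then rho * \sum_(s : {ffun 'I_n -> bool} | recv par s == w.2) succ_weight s
  else (1 - rho) * ((w.2 == [ffun => false])%:R).

Definition probE (E : {set Omega n}) : R := \sum_(w in E) Pomega w.

Definition Xev (i : 'I_n) (v : bool) : {set Omega n} := [set w : Omega n | w.2 i == v].

Definition condP (E : {set Omega n}) (i : 'I_n) (v : bool) : R :=
  probE (E :&: Xev i v) / probE (Xev i v).

Definition Bi (p : R) (i : 'I_n) (E : {set Omega n}) : {set Omega n} :=
  [set w : Omega n | p <= condP E i (w.2 i)].

Definition Bp (p : R) (E : {set Omega n}) : {set Omega n} :=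
  \bigcap_(i : 'I_n) Bi p i E.

Definition Cp (p : R) (E : {set Omega n}) : set (Omega n) :=
  [set w : Omega n | forall l : nat, (0 < l)%N -> w \in iter l (Bp p) E].

End Prob.

Definition Gev (n : nat) : {set Omega n} := [set w : Omega n | w.1].

Definition q1 (R : realType) (rho eps : R) : R := rho * eps / (1 - rho * (1 - eps)).
Definition q2 (R : realType) (n : nat) (eps : R) : R := (1 - eps) ^+ (n.-1).

(* Main.v *)
Require Import Defs.
From HB Require Import structures.
From mathcomp Require Import all_boot all_order all_algebra.
From mathcomp Require Import boolp classical_sets reals.
From mathcomp Require Import ring lra zify.
Import Order.TTheory GRing.Theory Num.Theory.
Local Open Scope ring_scope.
Set Implicit Arguments. Unset Strict Implicit.

Section Aux.
Variables (R : realType) (n : nat) (rho eps : R) (par : 'I_n -> option 'I_n).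
Hypotheses (Hr0 : 0 < rho) (Hr1 : rho < 1) (He0 : 0 < eps) (He1 : eps < 1).

Ltac H4 := have := He0; have := He1; have := Hr0; have := Hr1; move=> ? ? ? ?.
Ltac L := H4; lra.
Ltac N := H4; nra.
Local Notation sw := (@succ_weight R n eps).
Definition mu (Q : pred {ffun 'I_n -> bool}) : R := \sum_(s | Q s) sw s.
Definition z0 : {ffun 'I_n -> bool} := [ffun => false].
Local Notation f := (fun o => obind par o).

Lemma sw_ge0 s : 0 <= sw s.
Proof. apply: prodr_ge0 => j _; case: (s j) => /=; L. Qed.

Lemma mu_ge0 Q : 0 <= mu Q.
Proof. by apply: sumr_ge0 => s _; apply: sw_ge0. Qed.

Lemma mu_mono (Q Q' : pred {ffun 'I_n -> bool}) :
  (forall s, Q s -> Q' s) -> mu Q <= mu Q'.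
Proof.
move=> H; rewrite /mu [X in X <= _]big_mkcond [X in _ <= X]big_mkcond.
apply: ler_sum => s _; case: ifP => Hs; first by rewrite (H _ Hs).
by case: ifP => _ //; apply: sw_ge0.
Qed.

Lemma sum_prod (F : 'I_n -> bool -> R) :
  \sum_(s : {ffun 'I_n -> bool}) \prod_j F j (s j) = \prod_j (F j true + F j false).
Proof. rewrite -bigA_distr_bigA; apply: eq_bigr => j _; by rewrite big_bool. Qed.

Lemma mu_sj j v : mu (fun s => s j == v) = if v then 1 - eps else eps.
Proof.
rewrite /mu big_mkcond /=.
pose G k (b : bool) : R := (if k == j then (b == v)%:R else 1) * (if b then 1 - eps else eps).
transitivity (\sum_(s : {ffun 'I_n -> bool}) \prod_k G k (s k)).
  apply: eq_bigr => s _; rewrite /sw /succ_weight (bigD1 j) //= [in RHS](bigD1 j) //=.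
  rewrite /G eqxx; under [in RHS]eq_bigr => k Hk do rewrite (negbTE Hk) mul1r.
  by case: (s j == v); rewrite ?mul1r ?mul0r.
rewrite (sum_prod G) (bigD1 j) //= big1 ?mulr1; last first.
  by move=> k Hk; rewrite /G (negbTE Hk) !mul1r; L.
by rewrite /G eqxx; clear G; case: v => /=; rewrite ?mul1r ?mul0r ?add0r ?addr0.
Qed.

Lemma mu_all : mu (fun s => [forall k, s k]) = (1 - eps) ^+ n.
Proof.
rewrite /mu big_mkcond /=.
transitivity (\sum_(s : {ffun 'I_n -> bool}) \prod_k ((s k)%:R * (if s k then 1 - eps else eps))).
  apply: eq_bigr => s _; rewrite big_split /=.
  case: (boolP [forall k, s k]) => H.
    by rewrite big1 ?mul1r // => k _; rewrite (forallP H).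
  move: H; rewrite negb_forall => /existsP [k Hk].
  by rewrite (bigD1 k) //= (negbTE Hk) !mul0r.
rewrite (sum_prod (fun _ b => b%:R * (if b then 1 - eps else eps))) /= (eq_bigr (fun _ => 1 - eps)); last by move=> k _; rewrite mul1r mul0r addr0.
by rewrite prodr_const card_ord.
Qed.

Lemma mu_T : mu predT = 1.
Proof.
rewrite /mu /succ_weight (sum_prod (fun _ b => if b then 1 - eps else eps)) big1 // => j _; L.
Qed.


Local Notation PE := (probE rho eps par).
Local Notation rv := (recv par).

Lemma Pomega_ge0 w : 0 <= Pomega rho eps par w.
Proof.
case: w => [[] x] /=.
  by apply: mulr_ge0; [L | apply: sumr_ge0 => s _; apply: sw_ge0].
by apply: mulr_ge0; [L | apply: ler0n].
Qed.

Lemma probE_formula (A : {set Omega n}) :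
  PE A = rho * mu (fun s => (true, rv s) \in A) + (1 - rho) * ((false, z0) \in A)%:R.
Proof.
rewrite /probE big_mkcond /=.
have -> : \sum_(w : Omega n) (if w \in A then Pomega rho eps par w else 0) =
  \sum_(b : bool) \sum_(x : {ffun 'I_n -> bool}) (if (b, x) \in A then Pomega rho eps par (b, x) else 0).
  by rewrite pair_big; apply: eq_big => // -[b x].
rewrite big_bool /=; congr (_ + _).
  rewrite /mu mulr_sumr [in RHS]big_mkcond [in RHS](partition_big rv xpredT) //=.
  apply: eq_bigr => x _; rewrite /Pomega /=.
  case: ifP => Hx.
    by rewrite mulr_sumr; apply: eq_bigr => s /eqP ->; rewrite Hx.
  by symmetry; apply: big1 => s /eqP ->; rewrite Hx.
rewrite (bigD1 z0) //= big1 ?addr0; last first.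
  by move=> x /negbTE Hx; rewrite /Pomega /=; case: ifP; rewrite ?(Hx : (x == [ffun=> false]) = false) ?mulr0.
by rewrite /Pomega /= /z0 eqxx; case: ifP => _; rewrite ?mulr0 ?mulr1.
Qed.

Lemma probE_sub (A B : {set Omega n}) : A \subset B -> PE A <= PE B.
Proof.
move=> /fintype.subsetP sub; rewrite /probE [X in X <= _]big_mkcond [X in _ <= X]big_mkcond.
apply: ler_sum => w _; case: ifP => wA; first by rewrite (sub _ wA).
by case: ifP => _ //; apply: Pomega_ge0.
Qed.

Lemma probE_ge0 A : 0 <= PE A.
Proof. by apply: sumr_ge0 => w _; apply: Pomega_ge0. Qed.

Lemma iter_None k : iter k f None = None.
Proof. by elim: k => //= k ->. Qed.

Lemma anc_refl i : anc par i i.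
Proof. by apply/existsP; exists ord0. Qed.

Lemma anc_seed j k : par j = None -> anc par j k -> k = j.
Proof.
move=> Hj /existsP [[[|t] Ht]] /=; first by move=> /eqP [].
by rewrite -/(iter t.+1 f (Some j)) iterSr /= Hj iter_None.
Qed.

Lemma anc_child j m k : par j = Some m -> anc par j k -> k = j \/ anc par m k.
Proof.
move=> Hj /existsP [[[|t] Ht]] /=; first by move=> /eqP [] ->; left.
rewrite -/(iter t.+1 f (Some j)) iterSr /= Hj => H; right; apply/existsP.
have Ht' : (t < n.+1)%N by rewrite ltnS in Ht; apply: ltnW.
by exists (Ordinal Ht').
Qed.

Lemma recv_s s i : rv s i -> s i.
Proof. by rewrite /recv ffunE => /forallP /(_ i); rewrite anc_refl. Qed.

Lemma recv_seed s j : par j = None -> rv s j = s j.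
Proof.
move=> Hj; apply/idP/idP; first exact: recv_s.
by move=> H; rewrite /recv ffunE; apply/forallP => k; apply/implyP => /(anc_seed Hj) ->.
Qed.

Lemma recv_child s j m : par j = Some m -> rv s m -> s j -> rv s j.
Proof.
move=> Hj Hm Hs; rewrite /recv ffunE; apply/forallP => k; apply/implyP => /(anc_child Hj) [->//|Hk].
by move: Hm; rewrite /recv ffunE => /forallP /(_ k) /implyP; apply.
Qed.

Lemma recv_all s : [forall k, rv s k] = [forall k, s k].
Proof.
apply/forallP/forallP => H k; first exact: recv_s.
by rewrite /recv ffunE; apply/forallP => j; rewrite H implybT.
Qed.

Definition within l k := iter l f (Some k) == None.

Lemma within_mono l l' k : (l <= l')%N -> within l k -> within l' k.
Proof.
elim: l' => [|l' IH]; first by rewrite leqn0 => /eqP ->.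
rewrite leq_eqVlt => /orP [/eqP -> //| Hl] Hw.
by rewrite /within /= (eqP (IH Hl Hw)).
Qed.

Lemma within_succ l j : within l.+1 j ->
  par j = None \/ exists2 m, par j = Some m & within l m.
Proof.
rewrite /within iterSr /=; case: (par j) => [m|] H; [right; exists m | left] => //.
Qed.

Lemma seed_exists l k : within l k -> exists j, par j = None.
Proof.
elim: l k => [|l IH] k; first by [].
by case/within_succ => [H|[m _ /IH]]; [exists k|].
Qed.

Lemma within_all : tree_acyclic par -> exists L, forall k, within L k.
Proof.
move=> Hac.
suff: forall sq : seq 'I_n, exists L, forall k, k \in sq -> within L k.
  by case/(_ (enum 'I_n)) => L HL; exists L => k; apply: HL; rewrite mem_enum.
elim => [|a sq [L HL]]; first by exists 0%N.
have [l Hl] := Hac a.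
exists (maxn l L) => k; rewrite in_cons => /orP [/eqP ->|Hk].
  by apply: (within_mono (leq_maxl l L)); apply/eqP.
by apply: (within_mono (leq_maxr l L)); apply: HL.
Qed.

Lemma mu_ext (Q Q' : pred {ffun 'I_n -> bool}) : Q =1 Q' -> mu Q = mu Q'.
Proof. by move=> H; apply: eq_bigl. Qed.

Lemma mu_notsj j : mu (fun s => ~~ s j) = eps.
Proof. by rewrite -(mu_sj j false); apply: mu_ext => s; rewrite eqbF_neg. Qed.

Lemma PX_false i : PE (Xev i false) = rho * mu (fun s => ~~ rv s i) + (1 - rho).
Proof.
rewrite probE_formula inE /= /z0 ffunE eqxx mulr1; congr (_ * _ + _).
by apply: mu_ext => s; rewrite inE /= eqbF_neg.
Qed.

Lemma PX_true i : PE (Xev i true) = rho * mu (fun s => rv s i).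
Proof.
rewrite probE_formula inE /= /z0 ffunE /= mulr0 addr0; congr (_ * _).
by apply: mu_ext => s; rewrite inE /= eqb_id.
Qed.

Lemma mu_recv_gt0 i : 0 < mu (fun s => rv s i).
Proof.
apply: (@lt_le_trans _ _ (mu (fun s => [forall k, s k]))).
  by rewrite mu_all; apply: exprn_gt0; L.
apply: mu_mono => s; rewrite -recv_all => /forallP; apply.
Qed.

Lemma PX_gt0 i v : 0 < PE (Xev i v).
Proof.
case: v; first by rewrite PX_true; apply: mulr_gt0 => //; apply: mu_recv_gt0.
rewrite PX_false; have := mu_ge0 (fun s => ~~ rv s i); move=> ?.
have : 0 <= rho * mu (fun s => ~~ rv s i) by apply: mulr_ge0 => //; L.
L.
Qed.

Lemma condP_T i v : condP rho eps par (setTfor (Omega n)) i v = 1.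
Proof.
rewrite /condP finset.setTI divff //; apply/negP => /eqP H.
by have := PX_gt0 i v; rewrite H ltxx.
Qed.

Lemma HC_pos : 0 < 1 - rho * (1 - eps).
Proof. have : rho * (1 - eps) < 1 * 1 by apply: ltr_pM; L. L. Qed.

Lemma q1_le1 : q1 rho eps <= 1.
Proof.
rewrite /q1 ler_pdivrMr; last exact: HC_pos.
rewrite mul1r; have : rho * (1 - eps) >= 0 by apply: mulr_ge0; L.
have : rho * eps >= 0 by apply: mulr_ge0; L.
move=> ? ?; N.
Qed.

Lemma q1_gt0 : 0 < q1 rho eps.
Proof.
rewrite /q1; apply: divr_gt0; first by apply: mulr_gt0.
have : rho * (1 - eps) < 1 * 1 by apply: ltr_pM; L.
L.
Qed.

Lemma ratio_le (N b d : R) : N <= rho * b -> 0 <= b -> b <= eps -> b <= d ->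
  N / (rho * d + (1 - rho)) <= q1 rho eps.
Proof.
move=> HN Hb0 Hbe Hbd.
have HD : 0 < rho * d + (1 - rho).
  have : 0 <= rho * d by apply: mulr_ge0; L.
  L.
have HC : 0 < 1 - rho * (1 - eps).
  have : rho * (1 - eps) < 1 * 1 by apply: ltr_pM; L.
  L.
rewrite /q1 ler_pdivrMr // mulrAC ler_pdivlMr //.
have h1 : b * (1 - rho) <= eps * (1 - rho) by apply: ler_wpM2r; L.
have h2 : b * (rho * eps) <= d * (rho * eps) by apply: ler_wpM2r => //; apply: mulr_ge0; L.
have h3 : N * (1 - rho * (1 - eps)) <= rho * b * (1 - rho * (1 - eps)) by apply: ler_wpM2r; L.
apply: (le_trans h3).
have -> : rho * b * (1 - rho * (1 - eps)) = rho * (b * (1 - rho) + b * (rho * eps)) by ring.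
have -> : rho * eps * (rho * d + (1 - rho)) = rho * (eps * (1 - rho) + d * (rho * eps)) by ring.
by apply: ler_wpM2l; L.
Qed.

Lemma condP_G_ge i v : q1 rho eps <= condP rho eps par (Gev n) i v.
Proof.
rewrite /condP; case: v.
  rewrite PX_true probE_formula !inE /= mulr0 addr0.
  rewrite (mu_ext (Q' := fun s => rv s i)); last by move=> s; rewrite !inE /= eqb_id.
  rewrite divff; first exact: q1_le1.
  by rewrite mulf_neq0 ?gt_eqF ?mu_recv_gt0 // lt0r_neq0.
rewrite PX_false probE_formula !inE /= mulr0 addr0.
rewrite (mu_ext (Q' := fun s => ~~ rv s i)); last by move=> s; rewrite !inE /= eqbF_neg.
set d := mu _.
have Hd : eps <= d.
  rewrite -(mu_notsj i); apply: mu_mono => s; apply: contra; apply: recv_s.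
have HD : 0 < rho * d + (1 - rho).
  have : 0 <= rho * d by apply: mulr_ge0; L.
  L.
have HC : 0 < 1 - rho * (1 - eps).
  have : rho * (1 - eps) < 1 * 1 by apply: ltr_pM; L.
  L.
rewrite /q1 ler_pdivrMr // mulrAC ler_pdivlMr //.
have h1 : eps * (1 - rho) <= d * (1 - rho) by apply: ler_wpM2r; L.
have -> : rho * d * (1 - rho * (1 - eps)) = rho * (d * (1 - rho) + eps * (rho * d)) by ring.
have -> : rho * eps * (rho * d + (1 - rho)) = rho * (eps * (1 - rho) + eps * (rho * d)) by ring.
by apply: ler_wpM2l; L.
Qed.

Lemma condP_seed_G j : par j = None -> condP rho eps par (Gev n) j false <= q1 rho eps.
Proof.
move=> Hj; rewrite /condP PX_false probE_formula !inE /= mulr0 addr0.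
rewrite (mu_ext (Q' := fun s => ~~ rv s j)); last by move=> s; rewrite !inE /= eqbF_neg.
apply: ratio_le => //; first exact: mu_ge0.
rewrite -(mu_notsj j); apply: mu_mono => s; by rewrite recv_seed.
Qed.

Lemma condP_Q (E : {set Omega n}) j (Q : pred {ffun 'I_n -> bool}) :
  (forall w, w \in E -> Q w.2) -> ~~ Q z0 ->
  (forall s, Q (rv s) -> ~~ rv s j -> ~~ s j) ->
  condP rho eps par E j false <= q1 rho eps.
Proof.
move=> HE HQ0 Hs; rewrite /condP PX_false.
have sub : E :&: Xev j false \subset [set w : Omega n | Q w.2 && ~~ w.2 j].
  apply/fintype.subsetP => w; rewrite !inE => /andP [wE /eqP wj].
  by rewrite HE //= wj.
apply: (@ratio_le _ (mu (fun s => Q (rv s) && ~~ rv s j))); last first.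
- by apply: mu_mono => s /andP [].
- rewrite -(mu_notsj j); apply: mu_mono => s /andP [] /Hs; apply.
- exact: mu_ge0.
apply: (le_trans (probE_sub sub)).
rewrite probE_formula inE /= (negbTE HQ0) /= mulr0 addr0.
by rewrite (mu_ext (Q' := fun s => Q (rv s) && ~~ rv s j)) // => s; rewrite inE.
Qed.

Definition Yst : {set Omega n} := [set w : Omega n | [forall k, w.2 k]].

Lemma condP_Y_false s0 : condP rho eps par Yst s0 false = 0.
Proof.
rewrite /condP.
have -> : Yst :&: Xev s0 false = finset.set0.
  apply/setP => w; rewrite !inE; apply/negP => /andP [/forallP H /eqP].
  by rewrite H.
by rewrite /probE big_set0 mul0r.
Qed.

Lemma condP_Y_true s0 : par s0 = None ->
  condP rho eps par Yst s0 true = (1 - eps) ^+ n.-1.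
Proof.
move=> Hs0; rewrite /condP PX_true probE_formula !inE /=.
have -> : [forall k, z0 k] = false.
  by apply/negP => /forallP /(_ s0); rewrite /z0 ffunE.
rewrite mulr0 addr0.
rewrite (mu_ext (Q' := fun s => [forall k, s k])); last first.
  move=> s; rewrite !inE /= recv_all eqb_id.
  apply/andP/idP => [[]//|H]; split => //; rewrite -recv_all in H; exact: (forallP H s0).
rewrite mu_all (mu_ext (Q := fun s => rv s s0) (Q' := fun s => s s0 == true)); last first.
  by move=> s; rewrite recv_seed // eqb_id.
rewrite mu_sj.
have Hn : (0 < n)%N by have := ltn_ord s0; lia.
rewrite -{1}(prednK Hn) exprS.
have h1 : rho * (1 - eps) != 0 by apply: mulf_neq0; rewrite lt0r_neq0 //; L.
by rewrite mulrA mulrAC divff // mul1r.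
Qed.

Lemma condP_mono (E F : {set Omega n}) i v : E \subset F ->
  condP rho eps par E i v <= condP rho eps par F i v.
Proof.
move=> H; rewrite /condP; apply: ler_wpM2r; first by rewrite invr_ge0 probE_ge0.
by apply: probE_sub; apply: finset.setSI.
Qed.

End Aux.

Lemma q2_le_q1 (R : realType) (n : nat) (rho eps : R) :
  (2 <= n)%N -> 0 < rho -> rho < 1 -> 0 < eps -> eps < 1 ->
  (forall epsbar : R, 0 < epsbar < 1 -> q1 rho epsbar = q2 n epsbar ->
     epsbar <= eps) -> q2 n eps <= q1 rho eps.
Proof.
move=> Hn Hr0 Hr1 He0 He1 Hbar.
rewrite leNgt; apply/negP => Hlt.
pose P : {poly R} := rho *: 'X - ((1 - 'X) ^+ n.-1 * ((1 - rho)%:P + rho *: 'X)).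
have HP x : P.[x] = rho * x - (1 - x) ^+ n.-1 * ((1 - rho) + rho * x).
  by rewrite /P !hornerE.
have Hn1 : (0 < n.-1)%N by lia.
have P1 : P.[1] = rho.
  by rewrite HP subrr expr0n eqn0Ngt Hn1 /= mul0r subr0 mulr1.
have HC : 0 < 1 - rho * (1 - eps).
  have : rho * (1 - eps) < 1 * 1 by apply: ltr_pM; lra.
  lra.
have Peps : P.[eps] < 0.
  move: Hlt; rewrite /q1 /q2 ltr_pdivrMr // HP.
  have -> : 1 - rho * (1 - eps) = (1 - rho) + rho * eps by ring.
  lra.
have [x /andP [Hx1 Hx2] /eqP Hx] := @poly_ivt R P eps 1 (ltW He1)
  (ltac:(rewrite P1; apply/andP; split; [exact: ltW | exact: ltW])).
have Hxe : eps < x.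
  rewrite lt_neqAle Hx1 andbT; apply/negP => /eqP Hex.
  by move: Peps; rewrite Hex Hx ltxx.
have Hx1' : x < 1.
  rewrite lt_neqAle Hx2 andbT; apply/negP => /eqP Hex.
  by move: Hx; rewrite Hex P1 => Hr; move: Hr0; rewrite Hr ltxx.
have : x <= eps.
  apply: Hbar; first by apply/andP; split; lra.
  have HCx : 0 < (1 - rho) + rho * x.
    have : 0 <= rho * x by apply: mulr_ge0; lra.
    lra.
  rewrite /q1 /q2.
  have -> : 1 - rho * (1 - x) = (1 - rho) + rho * x by ring.
  have E1 : rho * x = (1 - x) ^+ n.-1 * ((1 - rho) + rho * x).
    by apply/eqP; rewrite -subr_eq0 -HP Hx.
  rewrite {1}E1.
  by rewrite mulfK // gt_eqF.
lra.
Qed.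

Theorem proposition2 (R : realType) (n : nat) (rho eps : R) :
  (2 <= n)%N -> 0 < rho < 1 -> 0 < eps < 1 ->
  (forall epsbar : R, 0 < epsbar < 1 -> q1 rho epsbar = q2 n epsbar ->
     epsbar <= eps) ->
  forall (par : 'I_n -> option 'I_n), tree_acyclic par ->
  forall p : R,
    (p <= q1 rho eps -> Cp rho eps par p (Gev n) = setT) /\
    (q1 rho eps < p -> Cp rho eps par p (Gev n) = set0).
Proof.
move=> Hn /andP [Hr0 Hr1] /andP [He0 He1] Hbar par Hac p; split => Hp.
  have B1 : Bp rho eps par p (Gev n) = setTfor (Omega n).
    apply/setP => w; rewrite !inE; apply/finset.bigcapP => i _; rewrite inE.
    exact: (le_trans Hp (condP_G_ge par Hr0 Hr1 He0 He1 _ _)).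
  have BT : Bp rho eps par p (setTfor (Omega n)) = setTfor (Omega n).
    apply/setP => w; rewrite !inE; apply/finset.bigcapP => i _; rewrite inE.
    by rewrite (condP_T par Hr0 Hr1 He0 He1); apply: (le_trans Hp); apply: q1_le1.
  have It : forall l, (0 < l)%N -> iter l (Bp rho eps par p) (Gev n) = setTfor (Omega n).
    elim => // -[|l] IH _ /=; first by [].
    by rewrite /= in IH; rewrite IH.
  apply/seteqP; split => [w //|w _ l Hl].
  by rewrite It // inE.
have hq := q2_le_q1 Hn Hr0 Hr1 He0 He1 Hbar.
have hq1 := q1_gt0 Hr0 Hr1 He0 He1.
pose E l := iter l (Bp rho eps par p) (Gev n).
have claim : forall l, (0 < l)%N -> forall w, w \in E l ->
    forall k, within par l k -> w.2 k.
  elim => // l IH _ w Hw k Hk.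
  case Hwk : (w.2 k) => //; exfalso.
  have Hb : p <= condP rho eps par (E l) k false.
    by move: Hw => /finset.bigcapP /(_ k isT); rewrite inE Hwk.
  suff : condP rho eps par (E l) k false <= q1 rho eps by lra.
  case: l IH Hw Hk Hb => [|l] IH Hw Hk Hb.
    case/within_succ: Hk => [Hs|[m _]]; last by [].
    exact: (condP_seed_G Hr0 Hr1 He0 He1).
  have IH' := IH isT.
  case/within_succ: Hk => [Hs|[m Hm Hwm]].
    apply: (@condP_Q _ _ _ _ par Hr0 Hr1 He0 He1 _ _ (fun x => x k)).
    - move=> w' Hw'; apply: IH' => //; apply: (@within_mono _ _ 1) => //.
      by rewrite /within /= Hs.
    - by rewrite /z0 ffunE.
    - by move=> s -> .
  apply: (@condP_Q _ _ _ _ par Hr0 Hr1 He0 He1 _ _ (fun x => x m)).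
  - by move=> w' Hw'; apply: IH'.
  - by rewrite /z0 ffunE.
  - move=> s Hsm; apply: contra => Hsk; exact: (recv_child Hm Hsm Hsk).
have [L0 HL0] := within_all Hac.
have HL : forall k, within par L0.+1 k by move=> k; apply: (within_mono (leqnSn L0)).
have Hn0 : (0 < n)%N by lia.
have [s0 Hs0] := seed_exists (HL (Ordinal Hn0)).
have sub : E L0.+1 \subset Yst n.
  apply/fintype.subsetP => w Hw; rewrite inE; apply/forallP => k.
  exact: (claim L0.+1 isT w Hw k (HL k)).
have Hempty : forall w, w \notin E L0.+2.
  move=> w; apply/negP => Hw.
  have : p <= condP rho eps par (E L0.+1) s0 (w.2 s0).
    by move: Hw => /finset.bigcapP /(_ s0 isT); rewrite inE.
  move/le_trans => /(_ _ (condP_mono par Hr0 Hr1 He0 He1 _ _ sub)).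
  case: (w.2 s0).
    by rewrite (condP_Y_true Hr0 Hr1 He0 He1 Hs0); rewrite /q2 in hq; lra.
  by rewrite condP_Y_false; lra.
apply/seteqP; split => [w Hw|w //].
by have := Hw L0.+2 isT; rewrite (negbTE (Hempty w)).
Qed.
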